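(* Let $\{\mathcal X^\varepsilon\}$ be a $C^m$-Markov perturbation ($m\ge1$) of a synchronized DRN $\mathcal X^0$ with pull-back synchronization time $N^-$. Then for $\mu$-a.e. $\omega\in\Omega$: (i) if $d(\theta^{-1}\omega)\ne0$ then $q^{(1)}(\omega)\ne0$; (ii) if $d(\theta^{-1}\omega)=0$ and $\omega\in\bigcap_{\ell=1}^{N^-(\omega)-1}\theta^{\ell+1}\Omega_\bullet$, then $q^{(1)}(\omega)=0$.
   Context: Let $k\ge2$, $S=\{s_1,\dots,s_k\}$, $\mathbb K=\{1,\dots,k\}$, $e_1,\dots,e_k$ the canonical basis of $\mathbb R^k$; $|\cdot|$ is the $\ell^1$-norm and induced matrix norm. $\Theta=(\Omega,\mathcal F,\mu,\theta)$ is an invertible metric dynamical system (standard probability space, $\theta$ invertible, ergodic, $\mu$-preserving). A Markov random network (MRN) over $\Theta$ is a process $(X_n)$ on $S\times\Omega$ with fibrewise measurable, stochastic, Markov transition probabilities; its transition cocycle $P_{\mathcal X}(n,\omega)=(\mathbb P\{X_n=(s_i,\theta^n\omega)\mid X_0=(s_j,\omega)\})_{i,j}$ is column-stochastic, $P_{\mathcal X}(0,\omega)=I_k$, $P_{\mathcal X}(m+n,\omega)=P_{\mathcal X}(m,\theta^n\omega)P_{\mathcal X}(n,\omega)$ for $\mu$-a.e. $\omega$. A DRN is an MRN $\mathcal X^0$ with cocycle $P^0$ having entries in $\{0,1\}$; it is synchronized if there is a measurable $N:\Omega\to\mathbb N$ such that, $\mu$-a.e., all columns of $P^0(n,\omega)$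 coincide for $n\ge N(\omega)$. For a synchronized DRN there are $\mathcal F$-measurable $J:\Omega\to\mathbb K$ (synchronization index) and $N^-:\Omega\to\mathbb N$ (a pull-back synchronization time) with $P^0(n,\omega)e_{J(\omega)}=e_{J(\theta^n\omega)}$ for all $n$, and $P^0(n,\theta^{-n}\omega)e_j=e_{J(\omega)}$ for all $j$ and $n\ge N^-(\omega)$, $\mu$-a.e. $\omega$. A Markov perturbation of $\mathcal X^0$ is a family $\{\mathcal X^\varepsilon:\varepsilon\ge0\}$ of MRNs over $\Theta$ with $\mathcal X^\varepsilon=\mathcal X^0$ at $\varepsilon=0$ and $|P_{\mathcal X^\varepsilon}(1,\omega)-P^0(1,\omega)|\le\varepsilon$; it is $C^m$ if for some $\varepsilon_0>0$ and $\mu$-a.e. $\omega$, $\varepsilon\mapsto P_{\mathcal X^\varepsilon}(1,\omega)$ is $C^m$ on $[0,\varepsilon_0]$. Let $P^{(1)}(n,\omega)=\frac{d}{d\varepsilon}P_{\mathcal X^\varepsilon}(n,\omega)\big|_{\varepsilon=0}$ and $q^{(1)}(\omega)=P^{(1)}(N^-(\omega),\theta^{-N^-(\omega)}\omega)\,e_{J(\theta^{-N^-(\omega)}\omega)}$. The first-order probability dissipation is $d(\omega)=P^{(1)}(1,\omega)e_{J(\omega)}\in\mathbb R^k$. Let $S_\bullet(\omega)=\{s_j\in S:P^0(1,\omega)e_j=e_{J(\theta\omega)}\}$ and $\Omega_\bullet=\{\omega\in\Omega:d(\omega)_j=0\text{ for all }j\text{ with }s_j\notin S_\bullet(\theta\omega)\}$.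 *)

(* Defs.v *)
From HB Require Import structures.
From mathcomp Require Import all_boot all_order all_algebra.
From mathcomp Require Import all_classical all_reals all_analysis.
Set Implicit Arguments. Unset Strict Implicit. Unset Printing Implicit Defensive.
Import Order.TTheory GRing.Theory Num.Theory.
Import numFieldNormedType.Exports.
Local Open Scope classical_set_scope.
Local Open Scope ring_scope.

Section Defs.
Variable R : realType.

Definition invertible_mds d (Omega : measurableType d)
    (theta thinv : Omega -> Omega) :=
  [/\ cancel theta thinv, cancel thinv theta,
      measurable_fun setT theta & measurable_fun setT thinv].

Definition measure_preserving d (Omega : measurableType d)
    (mu : probability Omega R) (theta : Omega -> Omega) :=
  forall A : set Omega, measurable A -> mu (theta @^-1` A) = mu A.

Definition ergodic d (Omega : measurableType d)
    (mu : probability Omega R) (theta : Omega -> Omega) :=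
  forall A : set Omega, measurable A -> theta @^-1` A = A ->
    mu A = 0%E \/ mu A = 1%E.

Definition evec k (j : 'I_k) : 'cV[R]_k := delta_mx j ord0.

(* induced l^1 matrix norm = maximal absolute column sum *)
Definition mnorm1 k (A : 'M[R]_k) : R :=
  \big[Num.max/0]_(j < k) \sum_(i < k) `|A i j|.

Definition col_stochastic k (A : 'M[R]_k) :=
  (forall i j, 0 <= A i j) /\ (forall j, \sum_(i < k) A i j = 1).

Fixpoint cocycle d (Omega : measurableType d) k (theta : Omega -> Omega)
    (P1 : Omega -> 'M[R]_k) (n : nat) (w : Omega) : 'M[R]_k :=
  match n with
  | 0 => 1%:M
  | n'.+1 => P1 (iter n' theta w) *m cocycle theta P1 n' w
  end.

Definition MRN d (Omega : measurableType d) k (P1 : Omega -> 'M[R]_k) :=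
  (forall i j, measurable_fun setT (fun w => P1 w i j)) /\
  (forall w, col_stochastic (P1 w)).

Definition DRN d (Omega : measurableType d) k (P1 : Omega -> 'M[R]_k) :=
  MRN P1 /\ (forall w i j, P1 w i j = 0 \/ P1 w i j = 1).

Definition synchronized d (Omega : measurableType d)
    (mu : probability Omega R) k (theta : Omega -> Omega)
    (P1 : Omega -> 'M[R]_k) :=
  exists N : Omega -> nat, (forall n, measurable [set w | N w = n]) /\
    {ae mu, forall w, forall n, (N w <= n)%N ->
       forall j j' : 'I_k, col j (cocycle theta P1 n w) =
                           col j' (cocycle theta P1 n w)}.

Definition has_deriv_within (a b : R) (f : R -> R) (x l : R) :=
  (fun y => (f y - f x) / (y - x)) @
     within [set y | a <= y <= b /\ y != x] (nbhs x) --> l.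

Definition Cm_on (m : nat) (a b : R) (f : R -> R) :=
  exists F : nat -> R -> R,
    (forall x, a <= x <= b -> F 0%N x = f x) /\
    (forall j, (j <= m)%N -> {within [set x | a <= x <= b], continuous (F j)}) /\
    (forall j, (j < m)%N -> forall x, a <= x <= b ->
        has_deriv_within a b (F j) x (F j.+1 x)).

(* {X^eps : eps >= 0} with one-step matrices Peps eps; Peps 0 is the DRN *)
Definition Markov_perturbation d (Omega : measurableType d) k
    (Peps : R -> Omega -> 'M[R]_k) :=
  (forall e, 0 <= e -> MRN (Peps e)) /\
  (forall e, 0 <= e -> forall w, mnorm1 (Peps e w - Peps 0 w) <= e).

Definition Cm_perturbation d (Omega : measurableType d)
    (mu : probability Omega R) k (m : nat) (Peps : R -> Omega -> 'M[R]_k) :=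
  Markov_perturbation Peps /\
  exists eps0 : R, 0 < eps0 /\
    {ae mu, forall w, forall i j : 'I_k, Cm_on m 0 eps0 (fun e => Peps e w i j)}.

Definition P1deriv d (Omega : measurableType d) k (theta : Omega -> Omega)
    (Peps : R -> Omega -> 'M[R]_k) (n : nat) (w : Omega) : 'M[R]_k :=
  \matrix_(i, j) lim ((fun e : R => (cocycle theta (Peps e) n w i j
                                     - cocycle theta (Peps 0) n w i j) / e)
                       @ 0^'+).

Definition dissip d (Omega : measurableType d) k (theta : Omega -> Omega)
    (Peps : R -> Omega -> 'M[R]_k) (J : Omega -> 'I_k) (w : Omega) : 'cV[R]_k :=
  P1deriv theta Peps 1 w *m evec (J w).

Definition q1 d (Omega : measurableType d) k (theta thinv : Omega -> Omega)
    (Peps : R -> Omega -> 'M[R]_k) (J : Omega -> 'I_k) (Nm : Omega -> nat)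
    (w : Omega) : 'cV[R]_k :=
  P1deriv theta Peps (Nm w) (iter (Nm w) thinv w)
    *m evec (J (iter (Nm w) thinv w)).

Definition Sbullet d (Omega : measurableType d) k (theta : Omega -> Omega)
    (P0 : Omega -> 'M[R]_k) (J : Omega -> 'I_k) (w : Omega) : set 'I_k :=
  [set j | P0 w *m evec j = evec (J (theta w))].

Definition Omega_bullet d (Omega : measurableType d) k (theta : Omega -> Omega)
    (Peps : R -> Omega -> 'M[R]_k) (J : Omega -> 'I_k) : set Omega :=
  [set w | forall j : 'I_k, ~ Sbullet theta (Peps 0) J (theta w) j ->
             dissip theta Peps J w j ord0 = 0].

End Defs.
Arguments evec {R k}.
Arguments mnorm1 {R k}.
Arguments col_stochastic {R k}.

(* Main.v *)
Require Import Defs.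
From HB Require Import structures.
From mathcomp Require Import all_boot all_order all_algebra.
From mathcomp Require Import all_classical all_reals all_analysis.
From mathcomp Require Import zify lra.
Import Order.TTheory GRing.Theory Num.Theory.
Local Open Scope classical_set_scope.
Local Open Scope ring_scope.

Module Helpers.
Import numFieldNormedType.Exports.
Set Implicit Arguments. Unset Strict Implicit.
Local Open Scope classical_set_scope.
Local Open Scope ring_scope.

Section Analytic.
Variable R : realType.

Definition dq (f : R -> R) (e : R) := (f e - f 0) / e.
Definition hd (f : R -> R) (L : R) := dq f e @[e --> 0^'+] --> L.

Lemma hd_lim f L : hd f L -> lim (dq f e @[e --> 0^'+]) = L.
Proof. by move=> h; apply: cvg_lim. Qed.

Lemma hd_cst c : hd (fun _ => c) 0.
Proof.
rewrite /hd /dq; under eq_fun do rewrite subrr mul0r.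
exact: cvg_cst.
Qed.

Lemma hd_cont f L : hd f L -> f e @[e --> 0^'+] --> f 0.
Proof.
move=> h.
have E : \forall e \near 0^'+, f 0 + e * dq f e = f e.
  near=> e; rewrite /dq mulrCA divff ?mulr1 ?subrKC //.
apply: cvg_trans (near_eq_cvg E) _.
have H : (f 0 + e * dq f e) @[e --> 0^'+] --> f 0 + 0 * L.
  apply: cvgD; first exact: cvg_cst.
  apply: cvgM => //; apply: cvg_at_right_filter; exact: cvg_id.
by rewrite mul0r addr0 in H.
Unshelve. all: by end_near. Qed.

Lemma hd_mul f g a b : hd f a -> hd g b ->
  hd (fun e => f e * g e) (a * g 0 + f 0 * b).
Proof.
move=> hf hg.
have E : \forall e \near 0^'+, dq f e * g e + f 0 * dq g e =
   dq (fun e => f e * g e) e.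
  near=> e; rewrite /dq mulrAC mulrA -mulrDl; congr (_ / _).
  by rewrite mulrBl mulrBr addrA subrK.
apply: cvg_trans (near_eq_cvg E) _.
apply: cvgD; apply: cvgM.
- exact: hf.
- exact: hd_cont hg.
- exact: cvg_cst.
- exact: hg.
Unshelve. all: by end_near. Qed.

Lemma hd_sum k (f : 'I_k -> R -> R) (L : 'I_k -> R) :
  (forall i, hd (f i) (L i)) -> hd (fun e => \sum_i f i e) (\sum_i L i).
Proof.
move=> h; rewrite /hd /dq.
under eq_fun do rewrite -sumrB mulr_suml.
apply: cvg_big => //.
  by move=> [x y] /=; apply: continuousD; [exact: cvg_fst|exact: cvg_snd].
by move=> i _; exact: h.
Qed.

End Analytic.

Section A2.
Variable R : realType.

Lemma Cm_hd m (eps0 : R) f : (1 <= m)%N -> 0 < eps0 -> Cm_on m 0 eps0 f ->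
  exists L, hd f L.
Proof.
move=> m1 e0 [F [F0 [_ Fd]]].
have := Fd 0%N m1 0; rewrite lexx ltW // => /(_ isT) hF.
exists (F 1%N 0).
have sub : (0:R)^'+ `=>` within [set y | 0 <= y <= eps0 /\ y != 0] (nbhs (0:R)).
  move=> A hA.
  have h1 : \forall y \near 0^'+, (0 <= y <= eps0 /\ y != 0) -> A y.
    move: hA; rewrite /at_right /within /= => hA.
    by apply: filterS hA => y h _.
  apply: filterS3 h1 (nbhs_right_gt 0) (nbhs_right_le e0) => y H y0 ye.
  by apply: H; rewrite ye ltW // gt_eqF.
rewrite /hd.
have E : \forall e \near 0^'+, (F 0%N e - F 0%N 0) / (e - 0) = dq f e.
  apply: filterS2 (nbhs_right_gt 0) (nbhs_right_le e0) => e e0' ee.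
  rewrite /dq subr0 (F0 e) ?(F0 0) //; first by rewrite lexx ltW.
  by rewrite ee ltW.
apply: cvg_trans (near_eq_cvg E) _.
exact: cvg_trans (cvg_app _ sub) hF.
Qed.
End A2.

Section A3.
Variable R : realType.
Variables (d : measure_display) (Omega : measurableType d) (theta : Omega -> Omega).
Variables (k : nat) (Peps : R -> Omega -> 'M[R]_k).

Definition Dr (f : R -> R) := lim (dq f e @[e --> 0^'+]).
Lemma hd_Dr f L : hd f L -> hd f (Dr f).
Proof. by move=> h; rewrite /Dr (hd_lim h). Qed.

Definition good u := forall i j, exists L, hd (fun e => Peps e u i j) L.

Lemma P1derivE n w i j :
  P1deriv theta Peps n w i j = Dr (fun e => cocycle theta (Peps e) n w i j).
Proof. by rewrite /P1deriv mxE. Qed.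

Lemma hd_cocycle n w : (forall n', (n' < n)%N -> good (iter n' theta w)) ->
  forall i j, hd (fun e => cocycle theta (Peps e) n w i j)
                 (P1deriv theta Peps n w i j).
Proof.
move=> hg i j; rewrite P1derivE.
suff : exists L, hd (fun e => cocycle theta (Peps e) n w i j) L.
  by move=> [L hL]; exact: hd_Dr hL.
elim: n hg i j => [|n IH] hg i j.
  by exists 0; exact: (hd_cst (1%:M i j : R)).
have IH' := IH (fun n' h => hg n' (ltnW h)).
have gn := hg n (ltnSn n).
exists (\sum_l (Dr (fun e => Peps e (iter n theta w) i l)
                 * cocycle theta (Peps 0) n w l j
               + Peps 0 (iter n theta w) i l
                 * Dr (fun e => cocycle theta (Peps e) n w l j))).
have -> : (fun e => cocycle theta (Peps e) n.+1 w i j) =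
   (fun e => \sum_l Peps e (iter n theta w) i l * cocycle theta (Peps e) n w l j).
  by apply: funext => e /=; rewrite mxE.
apply: hd_sum => l; apply: hd_mul.
- by have [L hL] := gn i l; exact: hd_Dr hL.
- by have [L hL] := IH' l j; exact: hd_Dr hL.
Qed.

Lemma P1deriv1 u : P1deriv theta Peps 1 u = \matrix_(i, j) Dr (fun e => Peps e u i j).
Proof.
apply/matrixP => i j; rewrite P1derivE mxE; congr Dr; apply: funext => e /=.
by rewrite mulmx1.
Qed.

Lemma P1deriv_rec n w : (forall n', (n' <= n)%N -> good (iter n' theta w)) ->
  P1deriv theta Peps n.+1 w =
    P1deriv theta Peps 1 (iter n theta w) *m cocycle theta (Peps 0) n w
    + Peps 0 (iter n theta w) *m P1deriv theta Peps n w.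
Proof.
move=> hg; apply/matrixP => i j.
have h := hd_cocycle (n := n.+1) (w := w) (fun n' h => hg n' h) (i:=i) (j:=j).
rewrite -(hd_lim h) !mxE -big_split /=.
have hn := hd_cocycle (n := n) (w := w) (fun n' h => hg n' (ltnW h)).
have gn := hg n (leqnn n).
apply: hd_lim.
have -> : (fun e => cocycle theta (Peps e) n.+1 w i j) =
   (fun e => \sum_l Peps e (iter n theta w) i l * cocycle theta (Peps e) n w l j).
  by apply: funext => e /=; rewrite mxE.
apply: hd_sum => l; rewrite P1deriv1 mxE; apply: hd_mul; last exact: (hn l j).
by have [L hL] := gn i l; exact: hd_Dr hL.
Qed.

Lemma P1deriv0 w : P1deriv theta Peps 0 w = 0.
Proof.
apply/matrixP => i j; rewrite P1derivE /Dr [X in _ = X]mxE.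
apply: hd_lim; exact: hd_cst.
Qed.

End A3.

Section Vec.
Variables (R : realType) (k : nat).

Definition pv (j : 'I_k) (v : 'cV[R]_k) :=
  \sum_i v i ord0 = 0 /\ (forall i, i != j -> 0 <= v i ord0).

Lemma mul_evec (A : 'M[R]_k) j i : (A *m evec j) i ord0 = A i j.
Proof. by rewrite /evec -colE mxE. Qed.

Lemma evecE (j i : 'I_k) : (evec j : 'cV[R]_k) i ord0 = (i == j)%:R.
Proof. by rewrite /evec mxE eqxx andbT. Qed.

Lemma pvD j a b : pv j a -> pv j b -> pv j (a + b).
Proof.
move=> [sa pa] [sb pb]; split.
  by under eq_bigr do rewrite mxE; rewrite big_split /= sa sb addr0.
by move=> i ij; rewrite mxE addr_ge0 ?pa ?pb.
Qed.

Lemma pv_split (j : 'I_k) (v : 'cV[R]_k) : \sum_i v i ord0 = v j ord0 + \sum_(i | i != j) v i ord0.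
Proof. exact: bigD1. Qed.

Lemma pv_le0 j v : pv j v -> v j ord0 <= 0.
Proof.
move=> [s p]; move: s; rewrite (pv_split j) => /eqP; rewrite addr_eq0 => /eqP ->.
by rewrite oppr_le0 sumr_ge0.
Qed.

Lemma pv_lt0 j v : pv j v -> v != 0 -> v j ord0 < 0.
Proof.
move=> h nz; rewrite lt_neqAle pv_le0 // andbT; apply/eqP => vj0.
move: nz; case: h => s p; move: s; rewrite (pv_split j) vj0 add0r => /eqP.
rewrite psumr_eq0; last by move=> i /p.
move=> /allP all0; apply/negP; rewrite negbK; apply/eqP/matrixP => i l.
rewrite (ord1 l) mxE; have [->|ij] := eqVneq i j; first by [].
by have := all0 i (mem_index_enum i); rewrite ij => /implyP/(_ isT)/eqP.
Qed.

Lemma pv_mul (M : 'M[R]_k) j j' v : col_stochastic M ->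
  M *m evec j = evec j' -> pv j v -> pv j' (M *m v).
Proof.
move=> [Mge Ms] Mj [s p]; split.
  under eq_bigr do rewrite mxE.
  rewrite exchange_big /=.
  under eq_bigr do rewrite -mulr_suml Ms mul1r.
  exact: s.
move=> i ij'; rewrite mxE (bigD1 j) //=.
have -> : M i j = 0 by rewrite -mul_evec Mj evecE (negbTE ij').
rewrite mul0r add0r sumr_ge0 // => l lj; rewrite mulr_ge0 ?p //.
Qed.

Lemma bullet_zero (M : 'M[R]_k) c (v : 'cV[R]_k) :
  (forall l, ~ (M *m evec l = evec c) -> v l ord0 = 0) ->
  \sum_i v i ord0 = 0 -> M *m v = 0.
Proof.
move=> h s; apply/matrixP => i o; rewrite (ord1 o) !mxE.
have -> : \sum_l M i l * v l ord0 = \sum_l (evec c : 'cV[R]_k) i ord0 * v l ord0.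
  apply: eq_bigr => l _.
  case: (pselect (M *m evec l = evec c)) => [e|ne].
    by rewrite -mul_evec e.
  by rewrite h // !mulr0.
by rewrite -mulr_sumr s mulr0.
Qed.

End Vec.

Section AE.
Variables (R : realType) (d : measure_display) (Omega : measurableType d).
Variables (mu : probability Omega R) (theta thinv : Omega -> Omega).
Hypothesis inv : invertible_mds theta thinv.
Hypothesis mp : measure_preserving mu theta.

Lemma ae_shift (P : Omega -> Prop) :
  {ae mu, forall w, P w} -> {ae mu, forall w, P (thinv w)}.
Proof.
case: inv => c1 c2 mth mti [A [mA A0 sub]].
have mA' : measurable (thinv @^-1` A).
  by have := mti measurableT _ mA; rewrite setTI.
exists (thinv @^-1` A); split => //.
  rewrite -(mp mA').
  have -> : theta @^-1` (thinv @^-1` A) = A.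
    by apply/seteqP; split => x /=; rewrite c1.
  exact: A0.
by move=> x /= nP; apply: sub.
Qed.

Lemma ae_iter (P : Omega -> Prop) :
  {ae mu, forall w, P w} -> {ae mu, forall w, forall j, P (iter j thinv w)}.
Proof.
move=> h; apply: ae_foralln => j; elim: j => [|j IH] //.
have := ae_shift IH; apply: filterS => w.
by rewrite iterSr.
Qed.

Lemma iter_cancel a x : iter a thinv (iter a theta x) = x.
Proof.
case: inv => c1 c2 _ _.
elim: a x => [//|a IH] x; by rewrite [iter a.+1 theta x]iterS iterSr c1 IH.
Qed.

Lemma iter_back n a w : iter n theta (iter (n + a) thinv w) = iter a thinv w.
Proof.
case: inv => c1 c2 _ _.
elim: n => [//|n IH]; by rewrite iterSr addSn iterS c2 IH.
Qed.
End AE.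

Section Diss.
Variable R : realType.
Variables (d : measure_display) (Omega : measurableType d) (theta : Omega -> Omega).
Variables (k : nat) (Peps : R -> Omega -> 'M[R]_k) (J : Omega -> 'I_k).

Lemma pv_dissip u : Markov_perturbation Peps -> good Peps u ->
  Peps 0 u *m evec (J u) = evec (J (theta u)) ->
  pv (J (theta u)) (dissip theta Peps J u).
Proof.
move=> [MR _] gu hJ.
have dE : forall i, dissip theta Peps J u i ord0 = Dr (fun e => Peps e u i (J u)).
  by move=> i; rewrite /dissip mul_evec P1deriv1 mxE.
have hL : forall i, hd (fun e => Peps e u i (J u)) (Dr (fun e => Peps e u i (J u))).
  by move=> i; have [L hL] := gu i (J u); exact: hd_Dr hL.
split.
  under eq_bigr do rewrite dE.
  have h1 := hd_sum hL.
  have h2 : hd (fun e => \sum_i Peps e u i (J u)) 0.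
    have E : \forall e \near 0^'+, 0 = dq (fun e => \sum_i Peps e u i (J u)) e.
      apply: filterS (nbhs_right_gt 0) => e e0; rewrite /dq.
      rewrite ((MR e (ltW e0)).2 u).2 ((MR 0 (lexx 0)).2 u).2.
      by rewrite subrr mul0r.
    rewrite /hd; apply: cvg_trans (near_eq_cvg E) _; exact: cvg_cst.
  by rewrite -(hd_lim h1) (hd_lim h2).
move=> i ij; rewrite dE; apply: limr_ge; first exact: cvgP (hL i).
have z : Peps 0 u i (J u) = 0 by rewrite -mul_evec hJ evecE (negbTE ij).
apply: filterS (nbhs_right_gt 0) => e e0; rewrite /dq z subr0.
rewrite divr_ge0 ?(ltW e0) //; exact: (((MR e (ltW e0)).2 u).1 i (J u)).
Qed.
End Diss.

End Helpers.
Import Helpers.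
Unset Implicit Arguments.

Theorem lemma4p4 (R : realType) (d : measure_display) (Omega : measurableType d)
  (mu : probability Omega R) (theta thinv : Omega -> Omega)
  (k : nat) (m : nat) (Peps : R -> Omega -> 'M[R]_k)
  (J : Omega -> 'I_k) (Nm : Omega -> nat) :
  (2 <= k)%N ->
  invertible_mds theta thinv ->
  measure_preserving mu theta ->
  ergodic mu theta ->
  (* X^0 := X^eps at eps = 0 is a synchronized DRN *)
  DRN (Peps 0) ->
  synchronized mu theta (Peps 0) ->
  (* J is a synchronization index, Nm = N^- a pull-back synchronization time *)
  (forall j, measurable [set w | J w = j]) ->
  (forall n, measurable [set w | Nm w = n]) ->
  {ae mu, forall w, forall n,
     cocycle theta (Peps 0) n w *m evec (J w) = evec (J (iter n theta w))} ->
  {ae mu, forall w, forall (j : 'I_k) n, (Nm w <= n)%N ->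
     cocycle theta (Peps 0) n (iter n thinv w) *m evec j = evec (J w)} ->
  (* C^m Markov perturbation, m >= 1 *)
  (1 <= m)%N ->
  Cm_perturbation mu m Peps ->
  {ae mu, forall w,
     (dissip theta Peps J (thinv w) != 0 ->
        q1 theta thinv Peps J Nm w != 0) /\
     (dissip theta Peps J (thinv w) = 0 ->
        (forall l, (1 <= l <= Nm w - 1)%N ->
           (iter l.+1 theta @` Omega_bullet theta Peps J) w) ->
        q1 theta thinv Peps J Nm w = 0)}.

Proof.
move=> k2 inv mp erg DRN0 sync mJ mN Hc Hpb m1 [MP [eps0 [e0 Hcm]]].
pose G := fun w => (forall n, cocycle theta (Peps 0) n w *m evec (J w)
                     = evec (J (iter n theta w))) /\ good Peps w.
have aG : {ae mu, forall w, G w}.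
  apply: filterS2 Hc Hcm => w h1 h2; split => // i j; exact: Cm_hd m1 e0 (h2 i j).
have aG' := ae_iter inv mp aG.
apply: filterS2 aG' Hpb => w HG Hp.
have thw : theta (thinv w) = w by case: inv.
set N := Nm w.
set w' := iter N thinv w.
have N1 : (0 < N)%N.
  rewrite lt0n; apply/negP => /eqP N0.
  have [j ij] : exists j : 'I_k, j != J w.
    have k1 : (1 < k)%N by [].
    have k0 : (0 < k)%N by apply: ltnW.
    case: (eqVneq (J w) (Ordinal k0)) => h.
      by exists (Ordinal k1); rewrite h.
    by exists (Ordinal k0); rewrite eq_sym.
  have := Hp j 0%N; rewrite /N in N0; rewrite N0 => /(_ isT) /=.
  rewrite mul1mx => /matrixP /(_ j ord0); rewrite !evecE eqxx (negbTE ij).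
  by move/eqP; rewrite oner_eq0.
have bk : forall n, (n <= N)%N -> iter n theta w' = iter (N - n) thinv w.
  by move=> n nN; have := iter_back inv n (N - n) w; rewrite subnKC.
have gd : forall n, (n <= N)%N -> G (iter n theta w').
  by move=> n nN; rewrite bk.
have Hw' := (gd 0%N (leq0n _)).1.
have step : forall n, (n < N)%N -> Peps 0 (iter n theta w') *m evec (J (iter n theta w'))
     = evec (J (theta (iter n theta w'))).
  move=> n nN; have := Hw' n.+1; rewrite /= -mulmxA Hw' => ->.
  by rewrite ?iterS.
pose q := fun n => P1deriv theta Peps n w' *m evec (J w').
have qrec : forall n, (n < N)%N -> q n.+1 =
    dissip theta Peps J (iter n theta w') + Peps 0 (iter n theta w') *m q n.
  move=> n nN; rewrite /q P1deriv_rec; last first.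
    move=> n' n'n; apply: (gd n' _).2; exact: leq_trans n'n (ltnW nN).
  by rewrite mulmxDl -!mulmxA Hw' /dissip.
have q0 : q 0%N = 0 by rewrite /q P1deriv0 mul0mx.
have qN : q1 theta thinv Peps J Nm w = q N by [].
have lastu : iter N.-1 theta w' = thinv w.
  rewrite bk ?leq_pred //; have -> : (N - N.-1 = 1)%N by lia.
  by [].
have NN : (N.-1 < N)%N by rewrite ltn_predL.
have qNE : q N = dissip theta Peps J (thinv w) + Peps 0 (thinv w) *m q N.-1.
  by have := qrec N.-1 NN; rewrite prednK // lastu.
have pvq : forall n, (n <= N)%N -> pv (J (iter n theta w')) (q n).
  elim => [_|n IH nN].
    rewrite q0; split; last by move=> i _; rewrite mxE.
    by rewrite big1 // => i _; rewrite mxE.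
  rewrite qrec //; apply: pvD.
    rewrite iterS; apply: pv_dissip => //; first exact: (gd n (ltnW nN)).2.
    exact: step.
  apply: pv_mul (DRN0.1.2 _) _ (IH (ltnW nN)).
  by rewrite step // ?iterS.
split.
  move=> dn0; rewrite qN qNE; apply/negP => /eqP h.
  have pd : pv (J w) (dissip theta Peps J (thinv w)).
    have := pv_dissip (theta:=theta) (J:=J) MP (gd N.-1 (leq_pred N)).2 (step N.-1 NN).
    by rewrite lastu thw.
  have pq : pv (J w) (Peps 0 (thinv w) *m q N.-1).
    have := pv_mul (DRN0.1.2 _) (step N.-1 NN) (pvq N.-1 (leq_pred N)).
    by rewrite lastu thw.
  have a := pv_lt0 pd dn0.
  have b := pv_le0 pq.
  have := congr1 (fun v : 'cV[R]_k => v (J w) ord0) h; rewrite /= [LHS]mxE [RHS]mxE => c.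
  lra.
move=> d0 hb; rewrite qN qNE d0 add0r.
have I : forall n, (n <= N.-1)%N -> Peps 0 (iter n theta w') *m q n = 0.
  elim => [_|n IH nN]; first by rewrite q0 mulmx0.
  rewrite qrec; last lia.
  rewrite mulmxDr IH; last lia.
  rewrite mulmx0 addr0 ?iterS.
  have nN' : (n < N)%N by lia.
  have pd := pv_dissip (theta:=theta) (J:=J) MP (gd n (ltnW nN')).2 (step n nN').
  apply: (bullet_zero (c := J (theta (theta (iter n theta w'))))); last exact: pd.1.
  have [v vB vw] := hb (N.-1 - n)%N (ltac:(lia)).
  have -> : iter n theta w' = v.
    rewrite bk; last lia.
    have -> : (N - n = (N.-1 - n).+1)%N by lia.
    by rewrite -vw (iter_cancel inv).
  exact: vB.
by have := I N.-1 (leqnn _); rewrite lastu.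
Qed.
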